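(* In the RSP setting described in the context, for every $i\ge 0$ we have $C_{\mathrm{opt}}(G^-_{S_{i+1}})\ge 2\,C_{\mathrm{opt}}(G^-_{S_i})$. Consequently, if $b\in\mathbb{N}^+$ and $i^*$ is the smallest integer $i\ge0$ with $C_{\mathrm{opt}}(G^-_{S_i})>b$, then for every $0\le i<i^*$, $$C_{\mathrm{opt}}(G^-_{S_i})\le 2^{-(i^*-1-i)}C_{\mathrm{opt}}(G^-_{S_{i^*-1}})\le 2^{i+1-i^*}\cdot b .$$
   Context: RSP setting: $G=(V,E,c,r)$ is a weakly connected directed graph with $n=|V|$, $m=|E|$, $c,r:E\to\mathbb{R}_{\ge0}$, vertices $s\ne t$, bound $R\ge 0$. Paths are edge sets; $P_v$ = set of paths from $s$ to $v$; $C_G(p)=\sum_{e\in p}c(e)$, $R_G(p)=\sum_{e\in p}r(e)$; $C_{\mathrm{opt}}(G)=\min\{C_G(p):p\in P_t,\ R_G(p)\le R\}$. It is assumed that a path $p\in P_t$ with $R_G(p)\le R$ exists and that $C_{\mathrm{opt}}(G)>0$. For $S>0$, $G^-_S=(V,E,c^-_S,r)$ with $c^-_S(e)=\lfloor c(e)/S\rfloor$ (same $s,t,R$). Bounds $L,U$: sort the edges $e_1,\dots,e_m$ ascending by cost; let $j^*$ be the smallest $j$ such that some $p\in P_t$ with $R_G(p)\le R$ uses only edges from $\{e_1,\dots,e_j\}$; set $L=c(e_{j^*})$ and $U=nL$. Scaling factors: $S_i=2^{-i}U/(2n)$ for $i\in\mathbb{N}_0$. *)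

(* Defs.v *)
From HB Require Import structures.
From mathcomp Require Import all_boot all_order all_algebra.
From mathcomp Require Import boolp classical_sets reals.
Set Implicit Arguments. Unset Strict Implicit. Unset Printing Implicit Defensive.
Import Order.TTheory GRing.Theory Num.Theory.
Local Open Scope ring_scope.
Local Open Scope classical_set_scope.

(* A directed multigraph: vertices V, edges E, each edge e goes from src e to dst e. *)

Fixpoint walk_from (V E : finType) (src dst : E -> V) (x : V) (p : seq E) : bool :=
  match p with
  | [::] => true
  | e :: p' => (src e == x) && walk_from src dst (dst e) p'
  end.

Definition is_path (V E : finType) (src dst : E -> V) (s v : V) (X : {set E}) : Prop :=
  exists p : seq E,
    [/\ X = [set e in p], walk_from src dst s p,
        last s (map dst p) = v & uniq (s :: map dst p)].

Definition weakly_connected (V E : finType) (src dst : E -> V) : Prop :=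
  forall x y : V,
    connect (fun a b => [exists e : E, ((src e == a) && (dst e == b))
                                   || ((src e == b) && (dst e == a))]) x y.

Definition wsum (R : realType) (E : finType) (w : E -> R) (X : {set E}) : R :=
  \sum_(e in X) w e.

(* C_opt for costs c, resources r, bound Rb: minimum (infimum; the set is finite)
   of the costs of s-t paths with resource <= Rb *)
Definition Copt (R : realType) (V E : finType) (src dst : E -> V) (s t : V)
    (c r : E -> R) (Rb : R) : R :=
  inf [set wsum c X | X in [set X | is_path src dst s t X /\ wsum r X <= Rb]].

Definition cminus (R : realType) (E : finType) (c : E -> R) (S : R) : E -> R :=
  fun e => (Num.floor (c e / S))%:~R.

Definition uses_prefix (E : finType) (es : seq E) (j : nat) (X : {set E}) : Prop :=
  forall e, e \in X -> e \in take j es.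

Definition feasible_prefix (R : realType) (V E : finType) (src dst : E -> V)
    (s t : V) (r : E -> R) (Rb : R) (es : seq E) (j : nat) : Prop :=
  exists X, [/\ is_path src dst s t X, wsum r X <= Rb & uses_prefix es j X].

Definition Sfac (R : realType) (U : R) (n i : nat) : R :=
  2 ^- i * U / (2 * n%:R).

(* Main.v *)
Require Import Defs.
From HB Require Import structures.
From mathcomp Require Import all_boot all_order all_algebra.
From mathcomp Require Import boolp classical_sets reals.
Import Order.TTheory GRing.Theory Num.Theory.
Local Open Scope ring_scope.

Lemma floor2 (R : realType) (x : R) :
  2 * (Num.floor x)%:~R <= (Num.floor (2 * x))%:~R :> R.
Proof.
have -> : 2 * (Num.floor x)%:~R = ((2 * Num.floor x)%:~R : R).
  by rewrite intrM.
rewrite ler_int floor_ge_int intrM.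
have h := floor_le x.
have -> : (2%:~R : R) = 2 by [].
by rewrite ler_pM2l.
Qed.

Lemma copt_double (R : realType) (V E : finType) (src dst : E -> V)
    (c c' r : E -> R) (s t : V) (Rb : R)
    (hc : forall e, 0 <= c e) (hcc : forall e, 2 * c e <= c' e)
    (hfeas : exists X, is_path src dst s t X /\ wsum r X <= Rb) :
  2 * Copt src dst s t c r Rb <= Copt src dst s t c' r Rb.
Proof.
rewrite /Copt; apply: lb_le_inf.
  by case: hfeas => X HX; exists (wsum c' X); exists X.
move=> y [X HX <-].
have hlb : has_lbound [set wsum c X | X in [set X | is_path src dst s t X /\ wsum r X <= Rb]].
  by exists 0 => z [Y _ <-]; rewrite /wsum sumr_ge0.
apply: (@le_trans _ _ (2 * wsum c X)).
  rewrite ler_pM2l //; apply: (ge_inf hlb); by exists X.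
rewrite /wsum mulr_sumr; exact: ler_sum.
Qed.

Theorem lemma9 (R : realType) (V E : finType) (src dst : E -> V)
    (c r : E -> R) (s t : V) (Rb : R)
    (hwc : weakly_connected src dst)
    (hc : forall e, 0 <= c e) (hr : forall e, 0 <= r e)
    (hst : s != t) (hRb : 0 <= Rb)
    (hfeas : exists X, is_path src dst s t X /\ wsum r X <= Rb)
    (hpos : 0 < Copt src dst s t c r Rb)
    (* e_1,...,e_m : the edges sorted ascending by cost *)
    (es : seq E) (hes_perm : perm_eq es (enum E))
    (hes_sort : sorted (fun a b => c a <= c b) es)
    (e0 : E)
    (* j* : smallest j with a feasible path using only e_1,...,e_j *)
    (jstar : nat) (hj : feasible_prefix src dst s t r Rb es jstar)
    (hjmin : forall j, (j < jstar)%N -> ~ feasible_prefix src dst s t r Rb es j)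
    (L U : R) (hL : L = c (nth e0 es jstar.-1)) (hU : U = #|V|%:R * L) :
  (forall i : nat,
     Copt src dst s t (cminus c (Sfac U #|V| i.+1)) r Rb
       >= 2 * Copt src dst s t (cminus c (Sfac U #|V| i)) r Rb)
  /\
  (forall (b : nat) (istar : nat), (0 < b)%N ->
     Copt src dst s t (cminus c (Sfac U #|V| istar)) r Rb > b%:R ->
     (forall i, (i < istar)%N ->
        Copt src dst s t (cminus c (Sfac U #|V| i)) r Rb <= b%:R) ->
     forall i : nat, (i < istar)%N ->
       Copt src dst s t (cminus c (Sfac U #|V| i)) r Rb
         <= 2 ^- (istar.-1 - i) * Copt src dst s t (cminus c (Sfac U #|V| istar.-1)) r Rb
       /\ 2 ^- (istar.-1 - i) * Copt src dst s t (cminus c (Sfac U #|V| istar.-1)) r Rb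
         <= 2 ^- (istar.-1 - i) * b%:R).
Proof.
set C := fun i => Copt src dst s t (cminus c (Sfac U #|V| i)) r Rb.
have hU0 : 0 <= U by rewrite hU hL mulr_ge0.
have hS0 : forall i, 0 <= Sfac U #|V| i.
  move=> i; rewrite /Sfac; apply: divr_ge0; last by rewrite mulr_ge0.
  by rewrite mulr_ge0 // invr_ge0 exprn_ge0.
have hSS : forall i, Sfac U #|V| i.+1 = Sfac U #|V| i / 2.
  move=> i; rewrite /Sfac exprSr invfM; rewrite -!mulrA; congr (_ * _).
  by rewrite mulrC -!mulrA; congr (_ * _); rewrite mulrC.
have step : forall i, 2 * C i <= C i.+1.
  move=> i; apply: copt_double => //.
    move=> e; rewrite /cminus ler0z floor_ge0 divr_ge0 //.
  move=> e; rewrite /cminus hSS.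
  have -> : c e / (Sfac U #|V| i / 2) = 2 * (c e / Sfac U #|V| i) by rewrite invf_div mulrCA.
  exact: floor2.
split; first exact: step.
have iter : forall i k, 2 ^+ k * C i <= C (i + k)%N.
  move=> i; elim=> [|k IH]; first by rewrite addn0 expr0 mul1r.
  rewrite addnS exprS -mulrA; apply: le_trans (step _).
  by rewrite ler_pM2l.
move=> b istar hb hgt hle i hi.
have hk : (i + (istar.-1 - i))%N = istar.-1 by rewrite subnKC // -ltnS prednK // (leq_ltn_trans _ hi).
split.
  move: hk; set k := (istar.-1 - i)%N => hk.
  have := iter i k; rewrite hk.
  by rewrite -ler_pdivlMl ?exprn_gt0.
rewrite ler_pM2l ?invr_gt0 ?exprn_gt0 //.
apply: hle; by rewrite prednK // (leq_ltn_trans _ hi).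
Qed.
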